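(* Let $n\geq 2$, $m\geq 1$ be integers and $K_{n,m}=T(3,3m+2;2,n-2)$. Its (symmetrized) Alexander polynomial is $$\Delta(K_{n,m})=(-1)^{n-1}+\sum_{i=1}^{n-1}(-1)^{n-i-1}(t^i+t^{-i})-\sum_{k=1}^{m}(t^{n+3k-2}+t^{-n-3k+2})+\sum_{k=1}^{m}(t^{n+3k-1}+t^{-n-3k+1}).$$
   Context: The twisted torus knot $T(u,v;u',v')$ is obtained from the torus knot $T(u,v)$ by adding $v'$ full right-handed twists on $u'$ adjacent strands. *)

(* Defs.v *)
From HB Require Import structures.
From mathcomp Require Import all_boot all_order all_algebra.
Set Implicit Arguments. Unset Strict Implicit. Unset Printing Implicit Defensive.
Import Order.TTheory GRing.Theory Num.Theory.
Local Open Scope ring_scope.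

(* Braid words on 3 strands: a letter i : 'I_2 stands for the positive
   Artin generator sigma_(i+1). *)
Definition braid3 := seq 'I_2.

(* Reduced Burau representation of the 3-strand braid group (positive
   generators only, so entries lie in Z[t]):
   sigma_1 |-> [[-t, 1], [0, 1]],  sigma_2 |-> [[1, 0], [t, -t]]. *)
Definition burau_gen (i : 'I_2) : 'M[{poly int}]_2 :=
  if val i == 0%N then
    \matrix_(r < 2, c < 2)
      (if (val r == 0%N) && (val c == 0%N) then - 'X
       else if (val r == 0%N) then 1 else if (val c == 1%N) then 1 else 0)
  else
    \matrix_(r < 2, c < 2)
      (if (val r == 0%N) && (val c == 0%N) then 1
       else if (val r == 0%N) then 0 else if (val c == 0%N) then 'X else - 'X).

Definition burau (w : braid3) : 'M[{poly int}]_2 :=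
  foldr (fun g M => burau_gen g *m M) 1%:M w.

Definition sig1 : 'I_2 := ord0.
Definition sig2 : 'I_2 := ord_max.

(* Twisted torus knot T(3, q; 2, s): closure of the 3-braid
   (sigma_1 sigma_2)^q (sigma_1^2)^s  (s full twists on 2 adjacent strands). *)
Definition twisted_torus_3_2 (q s : nat) : braid3 :=
  flatten (nseq q [:: sig1; sig2]) ++ nseq (2 * s) sig1.

(* Laurent polynomials are represented by a polynomial D together with a
   shift N : the Laurent polynomial is t^(-N) * D(t).
   Alexander polynomial of the closure of a 3-braid w (well defined up to
   units +-t^k of Z[t,t^-1]) : Delta satisfies
     (1 + t + t^2) * Delta(t)  =  +- t^k * det(I - burau w). *)
Definition alexander_assoc3 (w : braid3) (D : {poly int}) : Prop :=
  exists (s : int) (a b : nat), (s = 1 \/ s = -1) /\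
    s *: ('X ^+ a * \det (1%:M - burau w)) = 'X ^+ b * (D * (1 + 'X + 'X ^+ 2)).

(* The symmetrized Alexander polynomial of the closure of w equals
   t^(-N) D(t): it is an Alexander polynomial, symmetric under
   t <-> t^-1, and takes value 1 at t = 1 (these determine it uniquely). *)
Definition symmetrized_alexander3 (w : braid3) (N : nat) (D : {poly int}) : Prop :=
  [/\ alexander_assoc3 w D,
      ((size D <= 2 * N + 1)%N /\ (forall i, (i <= 2 * N)%N -> D`_i = D`_(2 * N - i)))
    & D.[1] = 1].

(* Main.v *)
Require Import Defs.
From HB Require Import structures.
From mathcomp Require Import all_boot all_order all_algebra.
From mathcomp Require Import ring zify.
Import Order.TTheory GRing.Theory Num.Theory.
Local Open Scope ring_scope.

Lemma det2 (R : comNzRingType) (A : 'M[R]_2) : \det A = A 0 0 * A 1 1 - A 0 1 * A 1 0.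
Proof.
rewrite (expand_det_row _ 0) !big_ord_recl big_ord0 /cofactor !det_mx11 !mxE /=.
have l1 : lift 0 (0:'I_1) = 1 :> 'I_2 by apply: val_inj.
have l0 : lift 1 (0:'I_1) = 0 :> 'I_2 by apply: val_inj.
rewrite l1 /= l0 (_ : ord0 = 0 :> 'I_2) // expr0 expr1; ring.
Qed.

Definition mx2 (a b c d : {poly int}) : 'M[{poly int}]_2 :=
  \matrix_(i < 2, j < 2) if val i == 0%N then (if val j == 0%N then a else b)
                         else (if val j == 0%N then c else d).

Lemma mx2_mul a b c d a' b' c' d' :
  mx2 a b c d *m mx2 a' b' c' d' =
  mx2 (a * a' + b * c') (a * b' + b * d') (c * a' + d * c') (c * b' + d * d').
Proof.
apply/matrixP => i j; rewrite !mxE !big_ord_recl big_ord0 !mxE /=.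
case: i => [[|[|?]] ?] //=; case: j => [[|[|?]] ?] //=; ring.
Qed.

Lemma det_mx2 a b c d : \det (mx2 a b c d) = a * d - b * c.
Proof. by rewrite det2 !mxE. Qed.

Lemma one_sub_mx2 a b c d : 1%:M - mx2 a b c d = mx2 (1 - a) (- b) (- c) (1 - d).
Proof.
apply/matrixP => i j; rewrite !mxE.
case: i => [[|[|?]] ?] //=; case: j => [[|[|?]] ?] //=; rewrite ?subr0 ?sub0r //.
Qed.

Lemma one_mx2 : (1%:M : 'M[{poly int}]_2) = mx2 1 0 0 1.
Proof.
apply/matrixP => i j; rewrite !mxE.
by case: i => [[|[|?]] ?] //=; case: j => [[|[|?]] ?].
Qed.

Lemma gen1 : burau_gen sig1 = mx2 (- 'X) 1 0 1.
Proof.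
apply/matrixP => i j; rewrite !mxE /=.
by case: i => [[|[|?]] ?] //=; case: j => [[|[|?]] ?].
Qed.

Lemma gen2 : burau_gen sig2 = mx2 1 0 'X (- 'X).
Proof.
apply/matrixP => i j; rewrite !mxE /=.
by case: i => [[|[|?]] ?] //=; case: j => [[|[|?]] ?].
Qed.

Lemma burau_cons g w : burau (g :: w) = burau_gen g *m burau w.
Proof. by []. Qed.

Lemma burau_cat w1 w2 : burau (w1 ++ w2) = burau w1 *m burau w2.
Proof.
elim: w1 => [|g w IH] /=; first by rewrite mul1mx.
by rewrite -/(burau _) IH mulmxA.
Qed.

Lemma burau_rot m : burau (flatten (nseq (3 * m + 2) [:: sig1; sig2])) =
  mx2 (- 'X^(3 * m + 2)) ('X^(3 * m + 2)) (- 'X^(3 * m + 2)) 0.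
Proof.
elim: m => [|m IH].
  rewrite /= -!/(burau _) /burau /= mulmx1 gen1 gen2 !mx2_mul.
  congr mx2; rewrite ?expr2; ring.
rewrite (_ : (3 * m.+1 + 2 = (3 * m + 2).+3)%N); last lia.
rewrite /= IH gen1 gen2 !mx2_mul.
congr mx2; rewrite ?exprS; ring.
Qed.

Fixpoint cc (k : nat) : {poly int} := if k is k'.+1 then 1 - 'X * cc k' else 0.

Lemma cc_eq k : (1 + 'X) * cc k = 1 - (- 'X) ^+ k.
Proof.
elim: k => [|k IH] /=; first by rewrite expr0 mulr0 subrr.
have -> : (1 + 'X) * (1 - 'X * cc k) = (1 + 'X) - 'X * ((1 + 'X) * cc k) by ring.
rewrite IH exprS; ring.
Qed.

Lemma burau_tw k : burau (nseq k sig1) = mx2 ((- 'X) ^+ k) (cc k) 0 1.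
Proof.
elim: k => [|k IH]; first by rewrite /burau /= one_mx2 expr0.
rewrite /= IH gen1 mx2_mul exprS; congr mx2; ring.
Qed.

Lemma det_main (Y a c : {poly int}) :
  \det (1%:M - mx2 (- Y) Y (- Y) 0 *m mx2 a c 0 1) = 1 + Y * (a + c) + Y ^+ 2 * a.
Proof. rewrite mx2_mul one_sub_mx2 det_mx2 expr2; ring. Qed.

Definition fpart (n N : nat) : {poly int} :=
  (-1) ^+ (n - 1) * 'X ^+ N
     + \sum_(1 <= i < n) (-1) ^+ (n - i - 1) * ('X ^+ (N + i) + 'X ^+ (N - i)).

Definition Spart (n N m c : nat) : {poly int} :=
  \sum_(1 <= k < m.+1) ('X ^+ (N + (n + 3 * k - c)) + 'X ^+ (N - (n + 3 * k - c))).

Lemma L1 n N : (1 <= n)%N -> (n <= N)%N ->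
  (1 + 'X) * fpart n N = 'X^(N + n) + 'X^(N - n + 1).
Proof.
elim: n => [//|n IH] _ hN.
case: n IH hN => [|n] IH hN.
  rewrite /fpart big_geq // addr0 expr0 mul1r subnK // exprD; ring.
have IH' := IH isT (ltnW hN).
rewrite /fpart big_nat_recr //=.
have E : \sum_(1 <= i < n.+1) (-1) ^+ (n.+2 - i - 1) * ('X^(N + i) + 'X^(N - i)) =
   - \sum_(1 <= i < n.+1) (-1) ^+ (n.+1 - i - 1) * ('X^(N + i) + 'X^(N - i)) :> {poly int}.
  rewrite -sumrN; apply: eq_big_nat => i /andP[_ hi].
  rewrite (_ : (n.+2 - i - 1 = (n.+1 - i - 1).+1)%N) ?exprS; last lia.
  ring.
rewrite E (_ : (n.+2 - n.+1 - 1 = 0)%N) ?expr0 ?mul1r; last lia.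
rewrite (_ : (n.+2 - 1 = (n.+1 - 1).+1)%N) ?exprS; last lia.
move: IH'; rewrite /fpart => IH'.
have -> : forall (a x S b : {poly int}), (1 + 'X) * (-1 * a * x + (- S + b)) =
   - ((1 + 'X) * (a * x + S)) + (1 + 'X) * b by move=> *; ring.
rewrite IH'.
have [p hp] : exists p, N = (n.+2 + p)%N by exists (N - n.+2)%N; lia.
subst N.
rewrite (_ : (n.+2 + p - n.+1 + 1 = p + 2)%N); last lia.
rewrite (_ : (n.+2 + p - n.+1 = p + 1)%N); last lia.
rewrite (_ : (n.+2 + p - n.+2 + 1 = p + 1)%N); last lia.
rewrite (_ : (n.+2 + p + n.+2 = (n.+2 + p + n.+1) + 1)%N); last lia.
rewrite !exprD; ring.
Qed.

Lemma Spart_S n N M c : Spart n N M.+1 c = Spart n N M c +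
  ('X ^+ (N + (n + 3 * M.+1 - c)) + 'X ^+ (N - (n + 3 * M.+1 - c))).
Proof. by rewrite /Spart big_nat_recr. Qed.

Lemma L2 n N M : (3 * M + n <= N + 1)%N ->
  (1 + 'X + 'X^2) * (Spart n N M 1 - Spart n N M 2) =
  'X^(N + n + 3 * M + 1) - 'X^(N + n + 1) - 'X^(N + 1 - n) + 'X^(N + 1 - n - 3 * M).
Proof.
elim: M => [|M IH] hM.
  rewrite /Spart !big_geq // subrr mulr0 muln0 !addn0 subn0; ring.
have IH' := IH ltac:(lia).
rewrite !Spart_S.
have -> : forall (A a B b : {poly int}), (1 + 'X + 'X^2) * ((A + a) - (B + b)) =
   (1 + 'X + 'X^2) * (A - B) + (1 + 'X + 'X^2) * (a - b) by move=> *; ring.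
rewrite IH'.
have [p hp] : exists p, N = (n + 3 * M + 2 + p)%N by exists (N - (n + 3 * M + 2))%N; lia.
subst N.
rewrite (_ : (n + 3 * M + 2 + p + (n + 3 * M.+1 - 1) = (n + 3 * M + 2 + p + n) + 3 * M + 2)%N); last lia.
rewrite (_ : (n + 3 * M + 2 + p - (n + 3 * M.+1 - 1)) = p)%N; last lia.
rewrite (_ : (n + 3 * M + 2 + p + (n + 3 * M.+1 - 2) = (n + 3 * M + 2 + p + n) + 3 * M + 1)%N); last lia.
rewrite (_ : (n + 3 * M + 2 + p - (n + 3 * M.+1 - 2)) = p + 1)%N; last lia.
rewrite (_ : (n + 3 * M + 2 + p + 1 - n - 3 * M.+1) = p)%N; last lia.
rewrite (_ : (n + 3 * M + 2 + p + 1 - n - 3 * M) = p + 3)%N; last lia.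
rewrite (_ : (n + 3 * M + 2 + p + 1 - n) = 3 * M + p + 3)%N; last lia.
rewrite (_ : (n + 3 * M + 2 + p + n + 3 * M.+1 + 1 = (n + 3 * M + 2 + p + n) + 3 * M + 4)%N); last lia.
rewrite !exprD; ring.
Qed.

Definition symN (N : nat) (p : {poly int}) :=
  (size p <= 2 * N + 1)%N /\ (forall i, (i <= 2 * N)%N -> p`_i = p`_(2 * N - i)).

Lemma symN0 N : symN N 0.
Proof. by split => [|i _]; rewrite ?size_poly0 ?coef0. Qed.

Lemma symND N p q : symN N p -> symN N q -> symN N (p + q).
Proof.
move=> [sp cp] [sq cq]; split.
  by rewrite (leq_trans (size_polyD _ _)) // geq_max sp sq.
by move=> i hi; rewrite !coefD (cp i hi) (cq i hi).
Qed.

Lemma symNN N p : symN N p -> symN N (- p).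
Proof. by move=> [sp cp]; split; rewrite ?size_polyN // => i hi; rewrite !coefN (cp i hi). Qed.

Lemma symN_sign N k p : symN N p -> symN N ((-1) ^+ k * p).
Proof.
move=> h; elim: k => [|k IH]; first by rewrite expr0 mul1r.
by rewrite exprS -mulrA mulN1r; apply: symNN.
Qed.

Lemma symN_XN N : symN N 'X^N.
Proof.
split; first by rewrite size_polyXn; lia.
move=> i hi; rewrite !coefXn; congr (_%:R).
by apply/eqP/eqP; lia.
Qed.

Lemma symN_pair N j : (j <= N)%N -> symN N ('X^(N + j) + 'X^(N - j)).
Proof.
move=> hj; split.
  rewrite (leq_trans (size_polyD _ _)) // geq_max !size_polyXn; apply/andP; split; lia.
move=> i hi; rewrite !coefD !coefXn addrC.
have -> : (i == N + j)%N = (2 * N - i == N - j)%N by apply/eqP/eqP; lia.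
have -> : (i == N - j)%N = (2 * N - i == N + j)%N by apply/eqP/eqP; lia.
by [].
Qed.

Lemma symN_sum N a b (F : nat -> {poly int}) :
  (forall i, (a <= i < b)%N -> symN N (F i)) -> symN N (\sum_(a <= i < b) F i).
Proof.
move=> h; rewrite big_nat_cond; apply: big_ind; first exact: symN0.
  exact: symND.
by move=> i /andP[hi _]; apply: h.
Qed.

Theorem lemma3p1 (n m : nat) (hn : (2 <= n)%N) (hm : (1 <= m)%N) :
  let N := (n + 3 * m - 1)%N in
  symmetrized_alexander3 (twisted_torus_3_2 (3 * m + 2) (n - 2)) N
    ((-1) ^+ (n - 1) * 'X ^+ N
     + \sum_(1 <= i < n) (-1) ^+ (n - i - 1) * ('X ^+ (N + i) + 'X ^+ (N - i))
     - \sum_(1 <= k < m.+1) ('X ^+ (N + (n + 3 * k - 2)) + 'X ^+ (N - (n + 3 * k - 2)))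
     + \sum_(1 <= k < m.+1) ('X ^+ (N + (n + 3 * k - 1)) + 'X ^+ (N - (n + 3 * k - 1)))).
Proof.
have [s ->] : exists s, n = (s + 2)%N by exists (n - 2)%N; lia.
move=> N.
have hN : N = (s + 3 * m + 1)%N by rewrite /N; lia.
clearbody N; subst N.
match goal with |- symmetrized_alexander3 ?w ?N ?D =>
  have -> : D = fpart (s + 2) N - Spart (s + 2) N m 2 + Spart (s + 2) N m 1 by [] end.
split.
- exists 1, 0%N, 0%N; split; first by left.
  rewrite scale1r !expr0 !mul1r.
  rewrite /twisted_torus_3_2 burau_cat burau_rot (_ : (s + 2 - 2 = s)%N); last lia.
  rewrite burau_tw det_main.
  have nz : (1 + 'X : {poly int}) != 0.
    by apply/eqP => /(congr1 (horner^~ 1)); rewrite !hornerE.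
  apply: (mulfI nz).
  have -> : forall Y a c : {poly int}, (1 + 'X) * (1 + Y * (a + c) + Y ^+ 2 * a) =
     (1 + 'X) * (1 + Y * a + Y ^+ 2 * a) + Y * ((1 + 'X) * c) by move=> *; ring.
  rewrite cc_eq.
  have -> : forall f S1 S2 : {poly int}, (1 + 'X) * ((f - S2 + S1) * (1 + 'X + 'X^2)) =
     (1 + 'X + 'X^2) * ((1 + 'X) * f) + (1 + 'X) * ((1 + 'X + 'X^2) * (S1 - S2))
     by move=> *; ring.
  rewrite L1 ?L2; try lia.
  rewrite (_ : (s + 3 * m + 1 - (s + 2) + 1 = 3 * m)%N); last lia.
  rewrite (_ : (s + 3 * m + 1 + 1 - (s + 2) - 3 * m = 0)%N); last lia.
  rewrite (_ : (s + 3 * m + 1 + 1 - (s + 2) = 3 * m)%N); last lia.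
  rewrite exprM sqrrN -exprM !exprD; ring.
- have HS : symN (s + 3 * m + 1) (fpart (s + 2) (s + 3 * m + 1)
     - Spart (s + 2) (s + 3 * m + 1) m 2 + Spart (s + 2) (s + 3 * m + 1) m 1).
    rewrite /fpart /Spart.
    apply: symND; [apply: symND; [apply: symND | apply: symNN] | ].
    + exact/symN_sign/symN_XN.
    + apply: symN_sum => i hi; apply/symN_sign/symN_pair; lia.
    + apply: symN_sum => i hi; apply/symN_pair; lia.
    + apply: symN_sum => i hi; apply/symN_pair; lia.
  exact: HS.
- have Hf : (fpart (s + 2) (s + 3 * m + 1)).[1] = 1.
    have := congr1 (horner^~ 1) (@L1 (s + 2) (s + 3 * m + 1) ltac:(lia) ltac:(lia)).
    rewrite !hornerE !expr1n => h; lia.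
  have HS : (Spart (s + 2) (s + 3 * m + 1) m 1).[1] = (Spart (s + 2) (s + 3 * m + 1) m 2).[1].
    by rewrite /Spart !horner_sum; apply: eq_bigr => k _; rewrite !hornerE !expr1n.
  rewrite hornerD hornerD hornerN Hf HS; ring.
Qed.
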